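(* Let $A$ be a word-topic matrix, $\delta\ge0$, $B$ a $\delta$-biased minimum variance inverse of $A$, and let $x^*\in\mathcal{S}_k$ be $r$-sparse. Let $\epsilon>4\delta r$ and suppose $n\ge 64\,\lambda_\delta(A)^2r^2\log k/\epsilon^2$. If $y$ is a document of $n$ words generated from $x^*$, then with probability at least $1-2/k$ the output $x$ of the Thresholded Linear Inverse algorithm on input $(y,B)$ satisfies $\|x-x^*\|_1\le\epsilon$.
   Context: A word-topic matrix is a matrix $A\in\mathbb{R}^{D\times k}$ with nonnegative entries whose columns each sum to $1$. $\mathcal{S}_k=\{z\in\mathbb{R}^k_{\ge0}:\sum_i z_i=1\}$. A document of $n$ words generated from $x\in\mathcal{S}_k$ consists of words drawn i.i.d. from the categorical distribution on $[D]$ with probabilities $Ax$; its count vector $y\in\mathbb{R}^D$ records how many times each word occurs. For a matrix $M$, $\|M\|_{\max}=\max_{i,j}|M_{ij}|$. $\lambda_\delta(A)$ is the optimal value of: minimize $\|B\|_{\max}$ over $B\in\mathbb{R}^{k\times D}$ subject to $\|BA-I_k\|_{\max}\le\delta$; a $\delta$-biased minimum variance inverse is a matrix $B$ with $\|BA-I_k\|_{\max}\le\delta$ and $\|B\|_{\max}=\lambda_\delta(A)$. The Thresholded Linear Inverse algorithm, given $y$ and $B$: computes $\hat x=\frac1n By$; sets $\tau=2\lambda_\delta(A)\sqrt{(\log k)/n}+\delta$; outputs $x\in\mathbb{R}^k$ with $x_i=0$ if $\hat x_i<\tau$ and $x_i=\hat x_i$ otherwise. A vector is $r$-sparse if it has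 at most $r$ nonzero entries. *)

(* Defs.v *)
From Stdlib Require Import Reals.
From mathcomp Require Import all_boot.

Set Implicit Arguments.
Unset Strict Implicit.
Unset Printing Implicit Defensive.

Local Open Scope R_scope.

Definition Rsum (I : finType) (F : I -> R) : R := \big[Rplus/0]_(i : I) F i.
Definition Rprod (I : finType) (F : I -> R) : R := \big[Rmult/1]_(i : I) F i.
Definition Rmaxf (I : finType) (F : I -> R) : R := \big[Rmax/0]_(i : I) F i.

Definition mx (m p : nat) := 'I_m -> 'I_p -> R.

Definition maxnorm (m p : nat) (M : mx m p) : R :=
  Rmaxf (fun ij : 'I_m * 'I_p => Rabs (M ij.1 ij.2)).

Definition mxmul (m q p : nat) (M : mx m q) (N : mx q p) : mx m p :=
  fun i j => Rsum (fun l : 'I_q => M i l * N l j).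

Definition idmx (k : nat) : mx k k := fun i j => if i == j then 1 else 0.

Definition mxsub (m p : nat) (M N : mx m p) : mx m p := fun i j => M i j - N i j.

Definition word_topic (D k : nat) (A : mx D k) : Prop :=
  (forall i j, 0 <= A i j) /\ (forall j, Rsum (fun i : 'I_D => A i j) = 1).

Definition in_simplex (k : nat) (x : 'I_k -> R) : Prop :=
  (forall i, 0 <= x i) /\ Rsum x = 1.

Definition sparse (k r : nat) (x : 'I_k -> R) : Prop :=
  exists S : {set 'I_k}, (#|S| <= r)%N /\ (forall i, i \notin S -> x i = 0).

Definition feasible (D k : nat) (A : mx D k) (delta : R) (B : mx k D) : Prop :=
  maxnorm (mxsub (mxmul B A) (@idmx k)) <= delta.

Definition is_glb_R (E : R -> Prop) (l : R) : Prop :=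
  (forall v, E v -> l <= v) /\ (forall m, (forall v, E v -> m <= v) -> m <= l).

Definition is_lambda_delta (D k : nat) (A : mx D k) (delta l : R) : Prop :=
  is_glb_R (fun v => exists B : mx k D, feasible A delta B /\ v = maxnorm B) l.

(* delta-biased minimum variance inverse (relative to the value l = lambda_delta(A)) *)
Definition min_var_inverse (D k : nat) (A : mx D k) (delta l : R) (B : mx k D) : Prop :=
  feasible A delta B /\ maxnorm B = l.

Definition word_prob (D k : nat) (A : mx D k) (x : 'I_k -> R) (j : 'I_D) : R :=
  Rsum (fun t : 'I_k => A j t * x t).

Definition doc_prob (D k n : nat) (A : mx D k) (x : 'I_k -> R)
  (w : {ffun 'I_n -> 'I_D}) : R :=
  Rprod (fun i : 'I_n => word_prob A x (w i)).

Definition counts (D n : nat) (w : {ffun 'I_n -> 'I_D}) (j : 'I_D) : R :=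
  INR #|[set i : 'I_n | w i == j]|.

Definition TLI (D k : nat) (n : nat) (B : mx k D) (l delta : R)
  (y : 'I_D -> R) : 'I_k -> R :=
  fun i =>
    let xhat := / INR n * Rsum (fun j : 'I_D => B i j * y j) in
    let tau := 2 * l * sqrt (ln (INR k) / INR n) + delta in
    if Rlt_dec xhat tau then 0 else xhat.

Definition l1dist (k : nat) (x z : 'I_k -> R) : R :=
  Rsum (fun i : 'I_k => Rabs (x i - z i)).

Definition success_prob (D k n : nat) (A : mx D k) (B : mx k D) (l delta eps : R)
  (xs : 'I_k -> R) : R :=
  Rsum (fun w : {ffun 'I_n -> 'I_D} =>
    doc_prob A xs w *
    (if Rle_dec (l1dist (TLI n B l delta (counts w)) xs) eps then 1 else 0)).

(* Main.v *)
From Stdlib Require Import Reals Lra Lia Psatz.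
Require Import Defs.
From Coquelicot Require Import Coquelicot.
Local Open Scope R_scope.

Definition Kf (q u : R) := (1 - q) / 2 * exp (- u) + (1 + q) / 2 * exp u.
Definition Kd (q u : R) := (1 + q) / 2 * exp u - (1 - q) / 2 * exp (- u).

Lemma Kf_pos q u : -1 <= q <= 1 -> 0 < Kf q u.
Proof.
  intros Hq. unfold Kf.
  pose proof (exp_pos u). pose proof (exp_pos (-u)).
  destruct (Req_dec q 1).
  - subst. nra.
  - nra.
Qed.

Lemma Kf_der q u : is_derive (Kf q) u (Kd q u).
Proof. unfold Kf, Kd. auto_derive; auto. ring. Qed.
Lemma Kd_der q u : is_derive (Kd q) u (Kf q u).
Proof. unfold Kf, Kd. auto_derive; auto. ring. Qed.

Definition Gf q u := (q + u) - Kd q u / Kf q u.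

Lemma Gf_der q u : -1 <= q <= 1 -> is_derive (Gf q) u ((Kd q u / Kf q u)^2).
Proof.
  intros Hq. pose proof (Kf_pos q u Hq) as HK.
  unfold Gf. unfold Kf, Kd in *.
  auto_derive.
  - lra.
  - set (a := exp u) in *. set (b := exp (-u)) in *. field. lra.
Qed.

Definition Rf q u := Kf q u * exp (- (q * u + u * u / 2)).

Lemma Rf_der q u : -1 <= q <= 1 ->
  is_derive (Rf q) u (- (Gf q u * Kf q u) * exp (- (q * u + u * u / 2))).
Proof.
  intros Hq. pose proof (Kf_pos q u Hq) as HK.
  unfold Rf, Gf. unfold Kf, Kd in *.
  auto_derive.
  - auto.
  - set (a := exp u) in *. set (b := exp (-u)) in *.
    unfold Rdiv in *. set (c := exp (- (q * u + u * u * / 2))). field. lra.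
Qed.

Lemma Gf_nonneg q u : -1 <= q <= 1 -> 0 <= u -> 0 <= Gf q u.
Proof.
  intros Hq Hu.
  destruct (MVT_gen (Gf q) 0 u (fun x => (Kd q x / Kf q x)^2)) as [c [Hc E]].
  - intros x _. apply Gf_der; auto.
  - intros x _. apply continuity_pt_filterlim. apply (ex_derive_continuous (V:=R_NormedModule)). 
    eexists. apply Gf_der; auto.
  - assert (G0 : Gf q 0 = 0).
    { unfold Gf, Kd, Kf. rewrite Ropp_0, exp_0. field; lra. }
    rewrite G0 in E. assert (0 <= (Kd q c / Kf q c)^2 * (u - 0)).
    { apply Rmult_le_pos. apply pow2_ge_0. lra. }
    lra.
Qed.

Lemma Kf_bound q u : -1 <= q <= 1 -> 0 <= u -> Kf q u <= exp (q * u + u * u / 2).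
Proof.
  intros Hq Hu.
  destruct (MVT_gen (Rf q) 0 u (fun x => - (Gf q x * Kf q x) * exp (- (q * x + x * x / 2)))) as [c [Hc E]].
  - intros x _. apply Rf_der; auto.
  - intros x _. apply continuity_pt_filterlim. apply (ex_derive_continuous (V:=R_NormedModule)). 
    eexists. apply Rf_der; auto.
  - rewrite Rmin_left in Hc by lra. rewrite Rmax_right in Hc by lra.
    assert (R0 : Rf q 0 = 1).
    { unfold Rf, Kf. rewrite Rmult_0_r, Rplus_0_l, Rmult_0_r. rewrite Rdiv_0_l, Ropp_0, exp_0. field. }
    rewrite R0 in E.
    pose proof (Gf_nonneg q c Hq (proj1 Hc)). pose proof (Kf_pos q c Hq).
    pose proof (exp_pos (- (q * c + c * c / 2))).
    assert (0 <= Gf q c * Kf q c * exp (- (q * c + c * c / 2)) * (u - 0)).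
    { apply Rmult_le_pos; [|lra]. apply Rmult_le_pos; [|lra]. apply Rmult_le_pos; lra. }
    assert (Rf q u <= 1) by nra.
    unfold Rf in H3. rewrite exp_Ropp in H3.
    pose proof (exp_pos (q * u + u * u / 2)).
    apply (Rmult_le_reg_r (/ exp (q * u + u * u / 2))). apply Rinv_0_lt_compat; lra.
    rewrite Rinv_r by lra. lra.
Qed.

From HB Require Import structures.
From mathcomp Require Import all_boot.


Lemma Rplus_assoc' : associative Rplus. Proof. move=> x y z; ring. Qed.
Lemma Rmult_assoc' : associative Rmult. Proof. move=> x y z; ring. Qed.
HB.instance Definition _ := Monoid.isComLaw.Build R 0 Rplus Rplus_assoc' Rplus_comm Rplus_0_l.
HB.instance Definition _ := Monoid.isComLaw.Build R 1 Rmult Rmult_assoc' Rmult_comm Rmult_1_l.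
HB.instance Definition _ := Monoid.isMulLaw.Build R 0 Rmult Rmult_0_l Rmult_0_r.
HB.instance Definition _ := Monoid.isAddLaw.Build R Rmult Rplus Rmult_plus_distr_r Rmult_plus_distr_l.

Section S.
Variable I : finType.

Lemma Rsum_add (F G : I -> R) : Rsum (fun i => F i + G i) = Rsum F + Rsum G.
Proof. by rewrite /Rsum big_split. Qed.

Lemma Rsum_scal (c : R) (F : I -> R) : Rsum (fun i => c * F i) = c * Rsum F.
Proof. by rewrite /Rsum big_distrr. Qed.

Lemma Rsum_le (F G : I -> R) : (forall i, F i <= G i) -> Rsum F <= Rsum G.
Proof. move=> H; rewrite /Rsum; elim/big_rec2: _ => [|i x y _ Hxy]. lra. by have := H i; lra. Qed.

Lemma Rsum_ge0 (F : I -> R) : (forall i, 0 <= F i) -> 0 <= Rsum F.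
Proof. move=> H; rewrite /Rsum; elim/big_rec: _ => [|i x _ Hx]. lra. by have := H i; lra. Qed.

Lemma Rsum_ext (F G : I -> R) : (forall i, F i = G i) -> Rsum F = Rsum G.
Proof. by move=> H; rewrite /Rsum; apply: eq_bigr. Qed.

Lemma Rsum_const (c : R) : Rsum (fun _ : I => c) = INR #|I| * c.
Proof.
  rewrite /Rsum big_const cardE; elim: (enum I) => [|a s IH] /=. ring.
  rewrite IH -/(INR (size s).+1) S_INR. ring.
Qed.

Lemma Rsum_ge_term (F : I -> R) i0 : (forall i, 0 <= F i) -> F i0 <= Rsum F.
Proof.
  move=> H; rewrite /Rsum (bigD1 i0) //=.
  have : 0 <= \big[Rplus/0]_(i | i != i0) F i.
  { elim/big_rec: _ => [|i x _ Hx]. lra. by have := H i; lra. }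
  lra.
Qed.
End S.

Lemma Rabs_le_inv (a b : R) : Rabs a <= b -> - b <= a <= b.
Proof. move=> H. split_Rabs; lra. Qed.

Lemma exp_convex_bound (c s y : R) : 0 < c -> 0 <= s -> Rabs y <= c ->
  2 * c * exp (s * y) <= (c - y) * exp (- (s * c)) + (c + y) * exp (s * c).
Proof.
  move=> Hc Hs Hy. move/Rabs_le_inv: Hy => [Hy1 Hy2].
  have E1 : exp (- (s * c)) >= exp (s * y) * (1 + (- (s * c) - s * y)).
  { have -> : exp (- (s * c)) = exp (s * y) * exp (- (s * c) - s * y)
      by rewrite -exp_plus; f_equal; ring.
    have := exp_ineq1_le (- (s * c) - s * y). have := exp_pos (s * y). nra. }
  have E2 : exp (s * c) >= exp (s * y) * (1 + (s * c - s * y)).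
  { have -> : exp (s * c) = exp (s * y) * exp (s * c - s * y)
      by rewrite -exp_plus; f_equal; ring.
    have := exp_ineq1_le (s * c - s * y). have := exp_pos (s * y). nra. }
  nra.
Qed.

Lemma mgf_bound (I : finType) (p Y : I -> R) (c s : R) :
  (forall i, 0 <= p i) -> Rsum p = 1 -> 0 < c -> (forall i, Rabs (Y i) <= c) -> 0 <= s ->
  Rsum (fun i => p i * exp (s * Y i)) <=
  exp (s * Rsum (fun i => p i * Y i) + s * s * c * c / 2).
Proof.
  move=> Hp Hs1 Hc HY Hs.
  set mu := Rsum (fun i => p i * Y i).
  have Hmu : Rabs mu <= c.
  { have H1 : Rsum (fun i => p i * Y i) <= Rsum (fun i => p i * c).
    { apply: Rsum_le => i. have := Rabs_le_inv _ _ (HY i). have := Hp i. nra. }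
    have H2 : Rsum (fun i => - (p i * c)) <= Rsum (fun i => p i * Y i).
    { apply: Rsum_le => i. have := Rabs_le_inv _ _ (HY i). have := Hp i. nra. }
    have E1 : Rsum (fun i => p i * c) = c.
    { rewrite (@Rsum_ext _ _ (fun i => c * p i)); last by move=> i; ring.
      by rewrite Rsum_scal Hs1; ring. }
    have E2 : Rsum (fun i => - (p i * c)) = - c.
    { rewrite (@Rsum_ext _ _ (fun i => (- c) * p i)); last by move=> i; ring.
      by rewrite Rsum_scal Hs1; ring. }
    apply: Rabs_le; rewrite /mu; lra. }
  set a := exp (- (s * c)). set b := exp (s * c).
  have H1 : Rsum (fun i => p i * exp (s * Y i)) <=
            Rsum (fun i => ((c * a + c * b) / (2 * c)) * p i + ((b - a) / (2 * c)) * (p i * Y i)).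
  { apply: Rsum_le => i. have := @exp_convex_bound c s (Y i) Hc Hs (HY i). rewrite -/a -/b => H.
    have := Hp i. move=> Hpi.
    have -> : (c * a + c * b) / (2 * c) * p i + (b - a) / (2 * c) * (p i * Y i)
            = p i * (((c - Y i) * a + (c + Y i) * b) / (2 * c)) by field; lra.
    apply: Rmult_le_compat_l => //.
    apply: (Rmult_le_reg_l (2 * c)); first lra.
    have E : forall X, 2 * c * (X / (2 * c)) = X by move=> X; field; lra.
    rewrite E; lra. }
  rewrite Rsum_add !Rsum_scal Hs1 -/mu in H1.
  have Hq : -1 <= mu / c <= 1.
  { move/Rabs_le_inv: Hmu => [h1 h2]. split.
    - apply: (Rmult_le_reg_l c) => //. rewrite /Rdiv -Rmult_assoc (Rmult_comm c mu) Rmult_assoc Rinv_r; lra.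
    - apply: (Rmult_le_reg_l c) => //. rewrite /Rdiv -Rmult_assoc (Rmult_comm c mu) Rmult_assoc Rinv_r; lra. }
  have Hu : 0 <= s * c by nra.
  have := @Kf_bound _ _ Hq Hu. rewrite /Kf -/b.
  have -> : exp (- (s * c)) = a by [].
  have -> : mu / c * (s * c) + s * c * (s * c) / 2 = s * mu + s * s * c * c / 2 by field; lra.
  have -> : (1 - mu / c) / 2 * a + (1 + mu / c) / 2 * b = (c * a + c * b) / (2 * c) * 1 + (b - a) / (2 * c) * mu
    by field; lra.
  lra.
Qed.

Lemma exp_le_inc (x y : R) : x <= y -> exp x <= exp y.
Proof. case=> [H|->]; [apply: Rlt_le; exact: exp_increasing | lra]. Qed.

Lemma exp_pow_INR (x : R) (n : nat) : exp x ^ n = exp (INR n * x).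
Proof.
  elim: n => [|n IH] /=. by rewrite Rmult_0_l exp_0.
  rewrite IH -exp_plus. f_equal. rewrite -/(INR n.+1) S_INR. ring.
Qed.

Lemma Rprod_const_ord (n : nat) (a : R) : Rprod (fun _ : 'I_n => a) = a ^ n.
Proof. rewrite /Rprod big_const_ord. elim: n => [|n IH] //=. by rewrite IH. Qed.

Lemma exp_Rsum (I : finType) (F : I -> R) : exp (Rsum F) = Rprod (fun i => exp (F i)).
Proof. by rewrite /Rsum /Rprod (big_morph _ exp_plus exp_0). Qed.

Lemma Rprod_mul (I : finType) (F G : I -> R) : Rprod (fun i => F i * G i) = Rprod F * Rprod G.
Proof. by rewrite /Rprod big_split. Qed.

Lemma Rprod_le (I : finType) (F G : I -> R) :
  (forall i, 0 <= F i <= G i) -> Rprod F <= Rprod G.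
Proof.
  move=> H. suff : 0 <= Rprod F <= Rprod G by case.
  rewrite /Rprod; elim/big_rec2: _ => [|i x y _ [Hx Hxy]]. lra.
  have := H i. move=> [h1 h2]. split. nra. nra.
Qed.

Lemma Rprod_ge0 (I : finType) (F : I -> R) : (forall i, 0 <= F i) -> 0 <= Rprod F.
Proof. move=> H; rewrite /Rprod; elim/big_rec: _ => [|i x _ Hx]. lra. by have := H i; nra. Qed.

Lemma sum_prod_ffun (n D : nat) (g : 'I_D -> R) :
  Rsum (fun w : {ffun 'I_n -> 'I_D} => Rprod (fun m => g (w m))) = Rprod (fun _ : 'I_n => Rsum g).
Proof. by rewrite /Rsum /Rprod (bigA_distr_bigA (fun (m : 'I_n) (j : 'I_D) => g j)). Qed.

Lemma tail_bound (D n : nat) (p Y : 'I_D -> R) (c t : R) :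
  (forall j, 0 <= p j) -> Rsum p = 1 -> 0 < c -> (forall j, Rabs (Y j) <= c) -> 0 <= t ->
  (0 < n)%N ->
  Rsum (fun w : {ffun 'I_n -> 'I_D} => Rprod (fun m => p (w m)) *
     (if Rle_dec t (/ INR n * Rsum (fun m => Y (w m)) - Rsum (fun j => p j * Y j)) then 1 else 0))
  <= exp (- (INR n * t * t / (2 * c * c))).
Proof.
  move=> Hp Hp1 Hc HY Ht Hn.
  have HnR : 0 < INR n by apply: lt_0_INR; apply/ltP.
  set mu := Rsum (fun j => p j * Y j).
  set s := t / (c * c).
  have Hs : 0 <= s by rewrite /s; apply: Rmult_le_pos => //; apply: Rlt_le; apply: Rinv_0_lt_compat; nra.
  set C := exp (- (s * INR n * (mu + t))).
  have step1 : forall w : {ffun 'I_n -> 'I_D},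
     Rprod (fun m => p (w m)) *
     (if Rle_dec t (/ INR n * Rsum (fun m => Y (w m)) - mu) then 1 else 0)
     <= C * Rprod (fun m => p (w m) * exp (s * Y (w m))).
  { move=> w. rewrite Rprod_mul.
    have Hpw : 0 <= Rprod (fun m => p (w m)) by apply: Rprod_ge0.
    have -> : C * (Rprod (fun m => p (w m)) * Rprod (fun m => exp (s * Y (w m))))
       = Rprod (fun m => p (w m)) * (C * Rprod (fun m => exp (s * Y (w m)))) by ring.
    apply: Rmult_le_compat_l => //.
    rewrite -exp_Rsum /C -exp_plus Rsum_scal.
    case: Rle_dec => H.
    - rewrite -exp_0. apply: exp_le_inc.
      have : t * INR n <= Rsum (fun m => Y (w m)) - mu * INR n.
      { have := Rmult_le_compat_r (INR n) _ _ (Rlt_le _ _ HnR) H.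
        have -> : (/ INR n * Rsum (fun m => Y (w m)) - mu) * INR n
                 = Rsum (fun m => Y (w m)) - mu * INR n by field; lra.
        done. }
      move=> H2. have := Rmult_le_compat_l s _ _ Hs H2. nra.
    - apply: Rlt_le; apply: exp_pos. }
  apply: Rle_trans; first exact: Rsum_le step1.
  rewrite Rsum_scal.
  rewrite (sum_prod_ffun n D (fun j => p j * exp (s * Y j))).
  have H3 := @mgf_bound _ p Y c s Hp Hp1 Hc HY Hs.
  rewrite -/mu in H3.
  have H4 : Rprod (fun _ : 'I_n => Rsum (fun j => p j * exp (s * Y j)))
            <= Rprod (fun _ : 'I_n => exp (s * mu + s * s * c * c / 2)).
  { apply: Rprod_le => _; split => //. apply: Rsum_ge0 => j.
    apply: Rmult_le_pos => //. apply: Rlt_le; apply: exp_pos. }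
  rewrite !Rprod_const_ord exp_pow_INR in H4.
  have HC : 0 < C by apply: exp_pos.
  rewrite Rprod_const_ord.
  apply: Rle_trans; first exact: Rmult_le_compat_l (Rlt_le _ _ HC) H4.
  rewrite /C -exp_plus. apply: Req_le. f_equal. rewrite /s. field. nra.
Qed.

Lemma Rmaxf_ge (I : finType) (F : I -> R) i0 : F i0 <= Rmaxf F.
Proof.
  rewrite /Rmaxf. have : i0 \in index_enum I by rewrite mem_index_enum.
  elim: (index_enum I) => [//|a s IH] /=. rewrite in_cons big_cons.
  case/orP => [/eqP->|/IH H]. apply: Rmax_l.
  apply: Rle_trans H _. apply: Rmax_r.
Qed.

Lemma Rmaxf_ge0 (I : finType) (F : I -> R) : 0 <= Rmaxf F.
Proof. rewrite /Rmaxf; elim/big_rec: _ => [|i x _ Hx]. lra. apply: Rle_trans Hx _; apply: Rmax_r. Qed.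

Lemma maxnorm_entry (m q : nat) (M : mx m q) i j : Rabs (M i j) <= maxnorm M.
Proof. rewrite /maxnorm. by have := Rmaxf_ge _ (fun ij : 'I_m * 'I_q => Rabs (M ij.1 ij.2)) (i, j). Qed.

Lemma maxnorm_ge0 (m q : nat) (M : mx m q) : 0 <= maxnorm M.
Proof. exact: Rmaxf_ge0. Qed.

Lemma Rsum_delta (k : nat) (x : 'I_k -> R) i :
  Rsum (fun t => (if i == t then 1 else 0) * x t) = x i.
Proof.
  rewrite /Rsum (bigD1 i) //= eqxx big1 => [|t Ht]. ring.
  by rewrite eq_sym (negbTE Ht); ring.
Qed.

Lemma Rsum_exchange (I J : finType) (F : I -> J -> R) :
  Rsum (fun i => Rsum (fun j => F i j)) = Rsum (fun j => Rsum (fun i => F i j)).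
Proof. by rewrite /Rsum exchange_big. Qed.

Lemma Rsum_opp (I : finType) (F : I -> R) : Rsum (fun i => - F i) = - Rsum F.
Proof.
  rewrite (@Rsum_ext _ _ (fun i => -1 * F i)) ?Rsum_scal => [|i]; ring.
Qed.

Lemma Rsum_sub (I : finType) (F G : I -> R) : Rsum (fun i => F i - G i) = Rsum F - Rsum G.
Proof.
  rewrite (@Rsum_ext _ _ (fun i => F i + - G i)) ?Rsum_add ?Rsum_opp => [|i]; ring.
Qed.

Lemma iter_Rplus (m : nat) (a : R) : iter m (Rplus a) 0 = INR m * a.
Proof. elim: m => [|m IH] /=. ring. rewrite IH -/(INR m.+1) S_INR. ring. Qed.

Lemma Rsum_indicator (I : finType) (S : {set I}) (a : R) :
  Rsum (fun i => if i \in S then a else 0) = INR #|S| * a.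
Proof. by rewrite /Rsum -big_mkcond big_const iter_Rplus. Qed.

Lemma counts_sum (D n : nat) (w : {ffun 'I_n -> 'I_D}) (b : 'I_D -> R) :
  Rsum (fun j => b j * counts w j) = Rsum (fun m => b (w m)).
Proof.
  have Hc : forall j, counts w j = Rsum (fun m : 'I_n => if w m == j then 1 else 0).
  { move=> j. rewrite /counts /Rsum -big_mkcond /=.
    rewrite big_const iter_Rplus Rmult_1_r. f_equal. apply: eq_card => m. by rewrite inE. }
  rewrite (@Rsum_ext _ (fun j => b j * counts w j) (fun j => Rsum (fun m => b j * (if w m == j then 1 else 0)))); last first.
  { move=> j. by rewrite Hc Rsum_scal. }
  rewrite Rsum_exchange. apply: Rsum_ext => m.
  rewrite (@Rsum_ext _ _ (fun j => (if w m == j then 1 else 0) * b j)); last by move=> j; ring.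
  exact: Rsum_delta.
Qed.

Lemma determ (k r : nat) (xs xh : 'I_k -> R) (tau : R) :
  (forall i, 0 <= xs i) -> sparse r xs -> 0 <= tau ->
  (forall i, xh i - xs i < tau /\ xs i - xh i <= tau) ->
  l1dist (fun i => if Rlt_dec (xh i) tau then 0 else xh i) xs <= 2 * INR r * tau.
Proof.
  move=> Hx [S [HS HSz]] Ht H.
  rewrite /l1dist.
  apply: (@Rle_trans _ (Rsum (fun i => if i \in S then 2 * tau else 0))).
  { apply: Rsum_le => i. have [h1 h2] := H i. have Hxi := Hx i.
    case HiS: (i \in S) => /=.
    - destruct (Rlt_dec (xh i) tau) as [Hlt|Hlt]; rewrite /=; apply: Rabs_le; lra.
    - have Hz := HSz i (negbT HiS). rewrite Hz in h1 h2 *.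
      destruct (Rlt_dec (xh i) tau) as [Hlt|Hlt]; rewrite /=; [apply: Rabs_le; lra | lra]. }
  rewrite Rsum_indicator.
  have : INR #|S| <= INR r by apply: le_INR; apply/leP.
  nra.
Qed.

Lemma final_arith (l r delta eps n L : R) :
  0 <= l -> 0 <= delta -> 0 <= r -> 0 < n -> 0 <= L ->
  eps > 4 * delta * r ->
  n >= 64 * l ^ 2 * r ^ 2 * L / eps ^ 2 ->
  2 * r * (2 * l * sqrt (L / n) + delta) <= eps.
Proof.
  move=> Hl Hd Hr Hn HL He Hnb.
  have Heps : 0 < eps.
  { have : 0 <= 4 * delta * r by apply: Rmult_le_pos => //; lra. lra. }
  set X := r * l * sqrt (L / n).
  have Hs : 0 <= sqrt (L / n) by apply: sqrt_pos.
  have HX : 0 <= X by rewrite /X; apply: Rmult_le_pos => //; apply: Rmult_le_pos.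
  have HX2 : X * X = r ^ 2 * l ^ 2 * L / n.
  { rewrite /X. have E : sqrt (L / n) * sqrt (L / n) = L / n.
    { apply: sqrt_sqrt. apply: Rmult_le_pos => //. apply: Rlt_le; apply: Rinv_0_lt_compat => //. }
    have -> : r * l * sqrt (L / n) * (r * l * sqrt (L / n)) = r * r * l * l * (sqrt (L / n) * sqrt (L / n)) by ring.
    rewrite E. field. lra. }
  have Hb : 64 * l ^ 2 * r ^ 2 * L <= n * eps ^ 2.
  { have Hp : 0 < eps ^ 2 by apply: pow_lt.
    have := Rmult_ge_compat_r (eps ^ 2) _ _ (Rle_ge _ _ (Rlt_le _ _ Hp)) Hnb.
    have -> : 64 * l ^ 2 * r ^ 2 * L / eps ^ 2 * eps ^ 2 = 64 * l ^ 2 * r ^ 2 * L by field; lra.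
    lra. }
  have HX3 : X * X * 64 <= eps ^ 2.
  { rewrite HX2. apply: (Rmult_le_reg_l n) => //.
    have -> : n * (r ^ 2 * l ^ 2 * L / n * 64) = 64 * l ^ 2 * r ^ 2 * L by field; lra.
    lra. }
  have HX4 : X <= eps / 8 by nra.
  have -> : 2 * r * (2 * l * sqrt (L / n) + delta) = 4 * X + 2 * r * delta by rewrite /X; ring.
  lra.
Qed.

Lemma ind01 (a b : R) : 0 <= (if Rle_dec a b then 1 else 0) <= 1.
Proof. destruct (Rle_dec a b); simpl; lra. Qed.

Theorem theorem4p1 (D k : nat) (A : mx D k) (delta l : R) (B : mx k D)
  (r : nat) (xs : 'I_k -> R) (eps : R) (n : nat) :
  word_topic A ->
  0 <= delta ->
  is_lambda_delta A delta l ->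
  min_var_inverse A delta l B ->
  in_simplex xs ->
  sparse r xs ->
  eps > 4 * delta * INR r ->
  (0 < n)%N ->
  INR n >= 64 * l ^ 2 * INR r ^ 2 * ln (INR k) / eps ^ 2 ->
  success_prob n A B l delta eps xs >= 1 - 2 / INR k.
Proof.
  move=> [HA0 HA1] Hd Hlam [Hfeas HBl] [Hx0 Hx1] Hsp He Hn Hnb.
  have HnR : 0 < INR n by apply: lt_0_INR; apply/ltP.
  pose p := word_prob A xs.
  have Hp0 : forall j, 0 <= p j.
  { move=> j. apply: Rsum_ge0 => t. by apply: Rmult_le_pos. }
  have Hp1 : Rsum p = 1.
  { rewrite /p /word_prob Rsum_exchange -Hx1. apply: Rsum_ext => t.
    rewrite (@Rsum_ext _ _ (fun j => xs t * A j t)) => [|j]; last by ring.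
    by rewrite Rsum_scal HA1; ring. }
  have Hdp : forall w : {ffun 'I_n -> 'I_D}, doc_prob A xs w = Rprod (fun m => p (w m)) by [].
  have Hdp0 : forall w : {ffun 'I_n -> 'I_D}, 0 <= doc_prob A xs w.
  { move=> w; rewrite Hdp; exact: Rprod_ge0. }
  have Hdp1 : Rsum (fun w : {ffun 'I_n -> 'I_D} => doc_prob A xs w) = 1.
  { rewrite (@Rsum_ext _ _ (fun w : {ffun 'I_n -> 'I_D} => Rprod (fun m => p (w m)))) => [|w] //.
    by rewrite (@sum_prod_ffun n D p) Rprod_const_ord Hp1 pow1. }
  have Hsucc0 : 0 <= success_prob n A B l delta eps xs.
  { apply: Rsum_ge0 => w. apply: Rmult_le_pos => //. exact: (proj1 (ind01 _ _)). }
  have Hl0 : 0 <= l by rewrite -HBl; apply: maxnorm_ge0.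
  have HB : forall i j, Rabs (B i j) <= l by move=> i j; rewrite -HBl; apply: maxnorm_entry.
  have HE : forall i t, Rabs (mxsub (mxmul B A) (@idmx k) i t) <= delta.
  { move=> i t. apply: Rle_trans Hfeas. apply: maxnorm_entry. }
  have Hxle1 : forall i, xs i <= 1 by move=> i; rewrite -Hx1; apply: Rsum_ge_term.
  have Hmu : forall i, - delta <= Rsum (fun j => p j * B i j) - xs i <= delta.
  { move=> i.
    have E : Rsum (fun j => p j * B i j) - xs i = Rsum (fun t => mxsub (mxmul B A) (@idmx k) i t * xs t).
    { rewrite /mxsub /mxmul /idmx.
      rewrite (@Rsum_ext _ _ (fun t => Rsum (fun j => B i j * A j t) * xs t - (if i == t then 1 else 0) * xs t));
        last first.
      { move=> t. by rewrite Rmult_minus_distr_r. }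
      rewrite Rsum_sub Rsum_delta. congr (_ - _).
      rewrite /p /word_prob.
      rewrite (@Rsum_ext _ _ (fun j => Rsum (fun t => B i j * A j t * xs t))); last first.
      { move=> j. rewrite Rmult_comm -Rsum_scal. apply: Rsum_ext => t; ring. }
      rewrite Rsum_exchange. apply: Rsum_ext => t.
      rewrite Rmult_comm -Rsum_scal. apply: Rsum_ext => j; ring. }
    have Hs1 : Rsum (fun t => delta * xs t) = delta by rewrite Rsum_scal Hx1; ring.
    have Hs2 : Rsum (fun t => - (delta * xs t)) = - delta by rewrite Rsum_opp Hs1.
    rewrite E. split.
    - rewrite -{1}Hs2.
      apply: Rsum_le => t. have := Rabs_le_inv _ _ (HE i t). have := Hx0 t. nra.
    - rewrite -{1}Hs1.
      apply: Rsum_le => t. have := Rabs_le_inv _ _ (HE i t). have := Hx0 t. nra. }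
  have [Hk2 | Hk] := leqP 2 k; last first.
  { destruct k as [|[|k]].
    - exfalso. move: Hx1. rewrite /Rsum big_ord0. lra.
    - have -> : 2 / INR 1 = 2 by rewrite /= /Rdiv Rinv_1 Rmult_1_r.
      lra.
    - by []. }
  have HkR : 2 <= INR k by have := le_INR 2 k (elimT leP Hk2).
  have HL : 0 < ln (INR k) by rewrite -ln_1; apply: ln_increasing; lra.
  have Hfin : 2 * INR r * (2 * l * sqrt (ln (INR k) / INR n) + delta) <= eps.
  { apply: final_arith => //; try lra. apply: pos_INR. }
  have Hgood : forall w : {ffun 'I_n -> 'I_D},
     (forall i, / INR n * Rsum (fun j => B i j * counts w j) - xs i < 2 * l * sqrt (ln (INR k) / INR n) + delta /\
                xs i - / INR n * Rsum (fun j => B i j * counts w j) <= 2 * l * sqrt (ln (INR k) / INR n) + delta) ->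
     l1dist (TLI n B l delta (counts w)) xs <= eps.
  { move=> w H. apply: Rle_trans Hfin.
    apply: (@determ k r xs (fun i => / INR n * Rsum (fun j => B i j * counts w j))) => //.
    have := sqrt_pos (ln (INR k) / INR n). nra.
    }
  have Htau0 : forall i, xs i - 0 <= 2 * l * sqrt (ln (INR k) / INR n) + delta -> True by [].
  have [Hl|Hlpos] : l = 0 \/ 0 < l by lra.
  {
    have HB0 : forall i j, B i j = 0.
    { move=> i j. have := Rabs_le_inv _ _ (HB i j). rewrite Hl. lra. }
    have Hz : forall i (y : 'I_D -> R), Rsum (fun j => B i j * y j) = 0.
    { move=> i y. rewrite (@Rsum_ext _ _ (fun j => 0 * y j)) ?Rsum_scal => [|j]; last by rewrite HB0.
      ring. }
    pose i0 : 'I_k := Ordinal (Hk2 : (1 < k)%N).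
    have Hd1 : 1 <= delta.
    { have := HE i0 i0. rewrite /mxsub /mxmul /idmx eqxx.
      rewrite (Hz i0 (fun j => A j i0)) /=. move/Rabs_le_inv. lra. }
    have Hall : forall w : {ffun 'I_n -> 'I_D},
        l1dist (TLI n B l delta (counts w)) xs <= eps.
    { move=> w. apply: Hgood => i. rewrite Hz Hl. have := Hx0 i. have := Hxle1 i. lra. }
    have -> : success_prob n A B l delta eps xs = 1.
    { rewrite /success_prob (@Rsum_ext _ _ (fun w => doc_prob A xs w)); first exact: Hdp1.
      move=> w.
      destruct (Rle_dec (l1dist (TLI n B l delta (counts w)) xs) eps) as [h|h]; rewrite /=.
      - exact: Rmult_1_r.
      - by have := Hall w. }
    have : 0 < 2 / INR k by apply: Rdiv_lt_0_compat; lra.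
    lra. }
  set t := 2 * l * sqrt (ln (INR k) / INR n).
  have Ht : 0 <= t by rewrite /t; have := sqrt_pos (ln (INR k) / INR n); nra.
  pose dplus i (w : {ffun 'I_n -> 'I_D}) :=
    / INR n * Rsum (fun m => B i (w m)) - Rsum (fun j => p j * B i j).
  pose dminus i (w : {ffun 'I_n -> 'I_D}) :=
    / INR n * Rsum (fun m => - B i (w m)) - Rsum (fun j => p j * - B i j).
  pose a i w := if Rle_dec t (dplus i w) then 1 else 0.
  pose b i w := if Rle_dec t (dminus i w) then 1 else 0.
  set e0 := exp (- (INR n * t * t / (2 * l * l))).
  have Ha : forall i, Rsum (fun w => doc_prob A xs w * a i w) <= e0.
  { move=> i. exact: (@tail_bound D n p (B i) l t Hp0 Hp1 Hlpos (HB i) Ht Hn). }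
  have Hb : forall i, Rsum (fun w => doc_prob A xs w * b i w) <= e0.
  { move=> i. have HY : forall j, Rabs (- B i j) <= l by move=> j; rewrite Rabs_Ropp.
    exact: (@tail_bound D n p (fun j => - B i j) l t Hp0 Hp1 Hlpos HY Ht Hn). }
  have He0 : e0 = / (INR k * INR k).
  { rewrite /e0.
    have Hsq : sqrt (ln (INR k) / INR n) * sqrt (ln (INR k) / INR n) = ln (INR k) / INR n.
    { apply: sqrt_sqrt. apply: Rmult_le_pos; first lra. apply: Rlt_le; apply: Rinv_0_lt_compat; lra. }
    have -> : INR n * t * t / (2 * l * l) = ln (INR k) + ln (INR k).
    { rewrite /t.
      have -> : INR n * (2 * l * sqrt (ln (INR k) / INR n)) * (2 * l * sqrt (ln (INR k) / INR n)) / (2 * l * l)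
              = 2 * INR n * (sqrt (ln (INR k) / INR n) * sqrt (ln (INR k) / INR n)) by field; lra.
      rewrite Hsq. field. lra. }
    rewrite exp_Ropp exp_plus exp_ln //. lra. }
  have Hab0 : forall i w, 0 <= a i w + b i w.
  { move=> i w. have := ind01 t (dplus i w). have := ind01 t (dminus i w). rewrite /a /b. lra. }
  have Hpt : forall w : {ffun 'I_n -> 'I_D},
      doc_prob A xs w - Rsum (fun i => doc_prob A xs w * a i w + doc_prob A xs w * b i w)
      <= doc_prob A xs w * (if Rle_dec (l1dist (TLI n B l delta (counts w)) xs) eps then 1 else 0).
  { move=> w.
    rewrite (@Rsum_ext _ _ (fun i => doc_prob A xs w * (a i w + b i w))) => [|i]; last by ring.
    rewrite Rsum_scal.
    have Hw := Hdp0 w.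
    suff : 1 - Rsum (fun i => a i w + b i w) <= (if Rle_dec (l1dist (TLI n B l delta (counts w)) xs) eps then 1 else 0).
    { move=> H. have := Rmult_le_compat_l _ _ _ Hw H. by rewrite Rmult_minus_distr_l Rmult_1_r. }
    have HS0 : 0 <= Rsum (fun i => a i w + b i w) by apply: Rsum_ge0.
    set S := Rsum (fun i => a i w + b i w) in HS0 *.
    destruct (Rle_dec (l1dist (TLI n B l delta (counts w)) xs) eps) as [g|g]; rewrite /=; first lra.
    destruct (Rlt_le_dec S 1) as [Hlt|Hge]; last lra.
    exfalso. apply: g. apply: Hgood => i.
    have Hai := @Rsum_ge_term _ (fun i => a i w + b i w) i (fun i => Hab0 i w).
    rewrite -/S in Hai.
    have Hab1 : a i w + b i w < 1 by lra.
    have Hm := Hmu i.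
    have Hc : Rsum (fun j => B i j * counts w j) = Rsum (fun m => B i (w m)) by apply: counts_sum.
    have Ho1 : Rsum (fun m => - B i (w m)) = - Rsum (fun m => B i (w m)) by apply: Rsum_opp.
    have Ho2 : Rsum (fun j => p j * - B i j) = - Rsum (fun j => p j * B i j).
    { rewrite -Rsum_opp. apply: Rsum_ext => j; ring. }
    move: Hab1. rewrite /a /b /dplus /dminus Ho1 Ho2 Hc.
    destruct (Rle_dec t (/ INR n * Rsum (fun m => B i (w m)) - Rsum (fun j => p j * B i j))) as [h1|h1];
    destruct (Rle_dec t (/ INR n * - Rsum (fun m => B i (w m)) - - Rsum (fun j => p j * B i j))) as [h2|h2];
    rewrite /=; try lra.
    move=> _. rewrite -/t.
    set M := Rsum (fun m => B i (w m)) in h1 h2 *.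
    set mu := Rsum (fun j => p j * B i j) in h1 h2 Hm.
    split; lra. }
  have Hsum : Rsum (fun w : {ffun 'I_n -> 'I_D} =>
       doc_prob A xs w - Rsum (fun i => doc_prob A xs w * a i w + doc_prob A xs w * b i w))
       = 1 - Rsum (fun i => Rsum (fun w => doc_prob A xs w * a i w) + Rsum (fun w => doc_prob A xs w * b i w)).
  { rewrite Rsum_sub Hdp1 Rsum_exchange. congr (_ - _). apply: Rsum_ext => i. by rewrite Rsum_add. }
  have H1 : 1 - Rsum (fun i => Rsum (fun w => doc_prob A xs w * a i w) + Rsum (fun w => doc_prob A xs w * b i w))
            <= success_prob n A B l delta eps xs.
  { rewrite -Hsum /success_prob. exact: Rsum_le Hpt. }
  have H2 : Rsum (fun i => Rsum (fun w => doc_prob A xs w * a i w) + Rsum (fun w => doc_prob A xs w * b i w))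
            <= Rsum (fun _ : 'I_k => e0 + e0).
  { apply: Rsum_le => i. have := Ha i. have := Hb i. lra. }
  rewrite Rsum_const card_ord He0 in H2.
  have -> : 2 / INR k = INR k * (/ (INR k * INR k) + / (INR k * INR k)) by field; lra.
  lra.
Qed.
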